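(* There is an absolute constant $C>0$ such that for all sufficiently large positive integers $n\le m$ the following holds. For every fixed $\mathbf{y}\in\mathbb{C}^m$, if $\mathbf{x}\sim CN(0,\mathbf{I}_{m\times m}/m)$, then with probability at least $1-m\exp(-n/6)$, \[ \frac1m\|\mathrm{phase}(\mathbf{x}+\mathbf{y})-\mathrm{phase}(\mathbf{x})\|_1\le C\log m\,\max\Big(\|\mathbf{y}\|,\frac nm\Big). \]
   Context: For $z\in\mathbb{C}\setminus\{0\}$, $\mathrm{phase}(z)=z/|z|$, and for a vector $\mathrm{phase}$ acts entrywise. $\|\cdot\|_1$ is the sum of moduli of entries and $\|\cdot\|$ the Euclidean norm. $CN(0,\Sigma)$ is the complex normal distribution with real and imaginary parts independent $N(0,\Sigma/2)$. *)

(* Defs.v *)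
From HB Require Import structures.
From mathcomp Require Import all_boot all_order all_algebra.
From mathcomp Require Import all_classical all_reals all_analysis.
Set Implicit Arguments. Unset Strict Implicit. Unset Printing Implicit Defensive.
Import Order.TTheory GRing.Theory Num.Theory.
Local Open Scope classical_set_scope.
Local Open Scope ring_scope.

(* Complex numbers are represented as pairs (real part, imaginary part). *)

Definition cmod {R : realType} (z : R * R) : R := Num.sqrt (z.1 ^+ 2 + z.2 ^+ 2).

(* phase z = z/|z|  (convention: phase 0 = 0, an event of probability zero) *)
Definition cphase {R : realType} (z : R * R) : R * R :=
  (z.1 / cmod z, z.2 / cmod z).

Definition czadd {R : realType} (z w : R * R) : R * R := (z.1 + w.1, z.2 + w.2).
Definition czsub {R : realType} (z w : R * R) : R * R := (z.1 - w.1, z.2 - w.2).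

Definition cnorm1 {R : realType} (m : nat) (v : 'I_m -> R * R) : R :=
  \sum_(i < m) cmod (v i).

Definition cnorm2 {R : realType} (m : nat) (v : 'I_m -> R * R) : R :=
  Num.sqrt (\sum_(i < m) ((v i).1 ^+ 2 + (v i).2 ^+ 2)).

(* Mutual independence of a finite family of real random variables:
   the product rule for every family of Borel sets (taking B i = setT
   covers every subfamily). *)
Definition mutually_independent {R : realType} (d : measure_display)
  (T : measurableType d) (P : probability T R) (I : finType) (X : I -> T -> R) :=
  forall B : I -> set R, (forall i, measurable (B i)) ->
    P (\bigcap_(i in [set: I]) (X i @^-1` B i)) =
    (\prod_(i : I) P (X i @^-1` B i))%E.

(* x ~ CN(0, I_m / m): the 2m real coordinates (true = real part,
   false = imaginary part) are mutually independent N(0, 1/(2m)). *)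
Definition is_CN_scaled {R : realType} (d : measure_display)
  (T : measurableType d) (P : probability T R) (m : nat)
  (X : bool * 'I_m -> T -> R) :=
  (forall k, measurable_fun [set: T] (X k)) /\
  mutually_independent P X /\
  (forall k (A : set R), measurable A ->
     P (X k @^-1` A) = normal_prob 0 (Num.sqrt (1 / (2 * m%:R))) A).

Definition cvec {R : realType} (T : Type) (m : nat) (X : bool * 'I_m -> T -> R)
  (w : T) : 'I_m -> R * R := fun i => (X (true, i) w, X (false, i) w).

(* Main.v *)
Require Import Defs.
From HB Require Import structures.
From mathcomp Require Import all_boot all_order all_algebra.
From mathcomp Require Import all_classical all_reals all_analysis.
From mathcomp Require Import ring lra.
From mathcomp Require Import measurable_realfun.
Import Order.TTheory GRing.Theory Num.Theory.
Local Open Scope classical_set_scope.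
Local Open Scope ring_scope.
Lemma cmod_ge0 {R : realType} (z : R * R) : 0 <= cmod z.
Proof. exact: sqrtr_ge0. Qed.

Lemma cmod_sq {R : realType} (z : R * R) : cmod z ^+ 2 = z.1 ^+ 2 + z.2 ^+ 2.
Proof. by rewrite /cmod sqr_sqrtr // addr_ge0 // sqr_ge0. Qed.

Lemma cmod_tri {R : realType} (p q : R * R) :
  cmod (p.1 + q.1, p.2 + q.2) <= cmod p + cmod q.
Proof.
have h0 := cmod_ge0 p; have h1 := cmod_ge0 q.
rewrite -[leRHS]ger0_norm ?addr_ge0 // -sqrtr_sqr /cmod /= ler_sqrt ?sqr_ge0 //.
have hp := cmod_sq p; have hq := cmod_sq q.
have cs : p.1 * q.1 + p.2 * q.2 <= cmod p * cmod q.
  apply: (le_trans (ler_norm _)).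
  rewrite -sqrtr_sqr /cmod -sqrtrM ?addr_ge0 ?sqr_ge0 // ler_sqrt ?mulr_ge0 ?addr_ge0 ?sqr_ge0 //.
  have : 0 <= (p.1 * q.2 - p.2 * q.1) ^+ 2 by exact: sqr_ge0.
  lra.
rewrite /cmod in hp hq cs *; nra.
Qed.

Lemma cmod_scale {R : realType} (k : R) (p : R * R) :
  cmod (k * p.1, k * p.2) = `|k| * cmod p.
Proof.
rewrite /cmod /= !exprMn -mulrDr sqrtrM ?sqr_ge0 // sqrtr_sqr //.
Qed.

Lemma cphase_le1 {R : realType} (z : R * R) : cmod (cphase z) <= 1.
Proof.
have [c0|c0] := eqVneq (cmod z) 0.
  by rewrite /cphase c0 invr0 !mulr0 /cmod /= expr0n /= addr0 sqrtr0.
rewrite /cphase /= !(mulrC z.1) !(mulrC z.2).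
rewrite (cmod_scale (cmod z)^-1 z) ger0_norm ?invr_ge0 ?cmod_ge0 //.
by rewrite mulVf.
Qed.

Lemma cdist_le2 {R : realType} (a b : R * R) :
  cmod (czsub (cphase (czadd a b)) (cphase a)) <= 2.
Proof.
rewrite /czsub.
have := cmod_tri (cphase (czadd a b)) ((-1) * (cphase a).1, (-1) * (cphase a).2).
rewrite cmod_scale normrN normr1 mul1r /= !mulN1r.
have := cphase_le1 (czadd a b); have := cphase_le1 a.
lra.
Qed.

Lemma cdist_le {R : realType} (a b : R * R) : 0 < cmod a ->
  cmod a * cmod (czsub (cphase (czadd a b)) (cphase a)) <= 2 * cmod b.
Proof.
move=> s0.
set u := czadd a b.
have hs : cmod a <= cmod u + cmod b.
  have := cmod_tri u ((-1) * b.1, (-1) * b.2).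
  rewrite cmod_scale normrN normr1 mul1r /u /czadd /= !mulN1r.
  by rewrite !addrK.
have hr : cmod u <= cmod a + cmod b by exact: cmod_tri.
have [r0|r0] := eqVneq (cmod u) 0.
  rewrite /czsub /cphase r0 invr0 !mulr0 !sub0r.
  have -> : ((- (a.1 / cmod a)), (- (a.2 / cmod a))) =
            ((- (cmod a)^-1) * a.1, (- (cmod a)^-1) * a.2).
    by rewrite !mulNr !(mulrC (cmod a)^-1).
  rewrite cmod_scale normrN ger0_norm ?invr_ge0 ?cmod_ge0 // mulVf ?gt_eqF //.
  rewrite mulr1; move: hs; rewrite r0; have := cmod_ge0 b; lra.
have rpos : 0 < cmod u by rewrite lt_def r0 cmod_ge0.
rewrite -[cmod a in leLHS]ger0_norm ?cmod_ge0 // -cmod_scale.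
have -> : (cmod a * (czsub (cphase u) (cphase a)).1,
           cmod a * (czsub (cphase u) (cphase a)).2) =
          (((cmod a - cmod u) / cmod u) * u.1 + b.1,
           ((cmod a - cmod u) / cmod u) * u.2 + b.2).
  rewrite /czsub /cphase /u /czadd /=; congr (_, _); field;
  by rewrite ?gt_eqF // -/(czadd a b) -/u ?gt_eqF.
apply: (le_trans (cmod_tri (((cmod a - cmod u) / cmod u) * u.1, ((cmod a - cmod u) / cmod u) * u.2) b)).
rewrite (cmod_scale _ u) normrM (gtr0_norm (x := (cmod u)^-1)) ?invr_gt0 //.
rewrite -mulrA mulVf ?gt_eqF // mulr1.
have : `|cmod a - cmod u| <= cmod b.
  rewrite ler_norml; apply/andP; split; lra.
lra.
Qed.
Lemma harm_bound {R : realType} (m : nat) (f : 'I_m -> nat) :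
  (forall j, (#|[set i | (f i <= j)%N]%SET| <= j)%N) ->
  forall A : {set 'I_m},
  \sum_(i in A) ((f i)%:R : R)^-1 <= \sum_(k < #|A|) (k.+1%:R : R)^-1.
Proof.
move=> H; suff: forall k (A : {set 'I_m}), #|A| = k ->
  \sum_(i in A) ((f i)%:R : R)^-1 <= \sum_(k < #|A|) (k.+1%:R : R)^-1.
  by move=> h A; exact: h.
elim=> [|k IH] A hA.
  move/eqP: hA; rewrite cards_eq0 => /eqP ->.
  by rewrite big_set0 cards0 big_ord0.
have [x0 x0A] : exists x, x \in A.
  apply/set0Pn; rewrite -card_gt0 hA //.
case: (arg_maxnP f x0A) => i1 i1A maxi1.
have hk : (k.+1 <= f i1)%N.
  have sub : A \subset [set i | (f i <= f i1)%N]%SET.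
    by apply/fintype.subsetP => i iA; rewrite inE; exact: maxi1.
  by rewrite -hA; exact: leq_trans (subset_leq_card sub) (H _).
rewrite (bigD1 i1) //= hA big_ord_recr /= addrC.
apply: lerD.
  have hA' : #|A :\ i1| = k.
    have i1A' : i1 \in A := i1A.
    by move: hA; rewrite (cardsD1 i1 A) i1A' add1n => -[].
  have e : \sum_(i in A | i != i1) ((f i)%:R : R)^-1 = \sum_(i in A :\ i1) ((f i)%:R : R)^-1.
    by apply: eq_bigl => i; rewrite !inE andbC.
  by rewrite e; have := IH _ hA'; rewrite hA'.
rewrite lef_pV2 ?posrE ?ltr0n ?(leq_trans _ hk) // ler_nat //.
Qed.

Lemma harm_ln {R : realType} (m : nat) :
  \sum_(k < m.+1) (k.+1%:R : R)^-1 <= 1 + ln (m.+1)%:R.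
Proof.
elim: m => [|m IH].
  by rewrite big_ord1 ln1 invr1 addr0.
rewrite big_ord_recr /=.
suff h : ln ((m.+1)%:R : R) + (m.+2%:R)^-1 <= ln (m.+2)%:R.
  by apply: (le_trans (lerD IH (lexx _))); rewrite -addrA lerD2l.
have hx : (-1 : R) < - (m.+2%:R)^-1.
  rewrite ltrN2 invf_lt1 ?ltr0n // ltr1n //.
have := le_ln1Dx hx.
have -> : 1 - (m.+2%:R : R)^-1 = (m.+1)%:R * (m.+2%:R)^-1.
  by field; rewrite gt_eqF //; have := ler0n R m; lra.
move=> h.
have e : ln ((m.+1)%:R / (m.+2)%:R : R) = ln ((m.+1)%:R : R) + ln ((m.+2)%:R^-1).
  by apply: lnM; rewrite posrE ?invr_gt0 ltr0n.
rewrite e lnV ?posrE ?ltr0n // in h.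
move: h; set a := ln _; set b := ln _; set x := _^-1; move=> h.
lra.
Qed.

Definition rho {R : realType} {m : nat} (a : 'I_m -> R) (i : 'I_m) : nat :=
  #|[set k | a k <= a i]%SET|.

Lemma rho_count {R : realType} (m : nat) (a : 'I_m -> R) (j : nat) :
  (#|[set i | (rho a i <= j)%N]%SET| <= j)%N.
Proof.
set A := [set i | (rho a i <= j)%N]%SET.
have [A0|[x0 x0A]] := set_0Vmem A.
  by rewrite A0 cards0.
case: (arg_maxnP (rho a) x0A) => i1 i1A maxi1.
apply: (@leq_trans (rho a i1)); last by have h : i1 \in A := i1A; move: h; rewrite inE.
apply: subset_leq_card; apply/fintype.subsetP => k kA.
rewrite inE; rewrite leNgt; apply/negP => lt.
have : (rho a i1 < rho a k)%N.
  apply: proper_card; apply/properP; split.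
    apply/fintype.subsetP => l; rewrite !inE => hl; exact: (le_trans hl (ltW lt)).
  by exists k; rewrite !inE ?lexx // -ltNge.
by rewrite ltnNge; have -> : (rho a k <= rho a i1)%N := maxi1 k kA.
Qed.
Lemma cnorm2_sq {R : realType} (m : nat) (y : 'I_m -> R * R) :
  cnorm2 y ^+ 2 = \sum_(i < m) cmod (y i) ^+ 2.
Proof.
rewrite /cnorm2 sqr_sqrtr; last by apply: sumr_ge0 => i _; rewrite addr_ge0 ?sqr_ge0.
by apply: eq_bigr => i _; rewrite cmod_sq.
Qed.

Lemma rho_le_m {R : realType} (m : nat) (a : 'I_m -> R) i : (rho a i <= m)%N.
Proof. by rewrite /rho; apply: (leq_trans (max_card _)); rewrite card_ord. Qed.

Lemma rho_lower {R : realType} (m n : nat) (a : 'I_m -> R) (u : nat -> R) :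
  (forall j : nat, (n <= j)%N -> (j <= m)%N ->
     (#|[set i | (a i < u j)%R]%SET| < j)%N) ->
  forall i, (n <= rho a i)%N -> u (rho a i) <= a i.
Proof.
move=> H i hi; rewrite leNgt; apply/negP => lt.
have := H _ hi (rho_le_m _ a i).
rewrite ltnNge => /negP; apply.
apply: subset_leq_card; apply/fintype.subsetP => k; rewrite !inE => hk.
exact: (le_lt_trans hk lt).
Qed.

Lemma amgm {R : realType} (t b s : R) : 0 < t -> 0 < s ->
  2 * b / s <= t * b ^+ 2 + (t * s ^+ 2)^-1.
Proof.
move=> t0 s0.
have e : t * b ^+ 2 + (t * s ^+ 2)^-1 - 2 * b / s = (t * s ^+ 2)^-1 * (t * b * s - 1) ^+ 2.
  by field; rewrite ?gt_eqF.
rewrite -subr_ge0 e; apply: mulr_ge0; last exact: sqr_ge0.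
by rewrite invr_ge0 mulr_ge0 ?exprn_ge0 ?ltW.
Qed.
Lemma det_bound {R : realType} (m n : nat) (x y : 'I_m -> R * R) (c : R) :
  0 < c -> (0 < n)%N -> (n <= m)%N ->
  (forall j : nat, (n <= j)%N -> (j <= m)%N ->
     (#|[set i | (cmod (x i) ^+ 2 < c * j%:R / m%:R ^+ 2)%R]%SET| < j)%N) ->
  m%:R^-1 * cnorm1 (fun i => czsub (cphase (czadd (x i) (y i))) (cphase (x i)))
   <= (3 + (1 + ln m%:R) / c) * Num.max (cnorm2 y) (n%:R / m%:R).
Proof.
move=> c0 n0 nm H.
have m0 : (0 < m)%N := leq_trans n0 nm.
have mR : (0 : R) < m%:R by rewrite ltr0n.
set a := fun i => cmod (x i) ^+ 2.
set mu := Num.max _ _.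
have nmu : n%:R / m%:R <= mu by rewrite le_max lexx orbT.
have ymu : cnorm2 y <= mu by rewrite le_max lexx.
have mu0 : 0 < mu.
  by apply: (lt_le_trans _ nmu); rewrite divr_gt0 ?ltr0n.
set t := m%:R / mu.
have t0 : 0 < t by rewrite divr_gt0.
set K := m%:R ^+ 2 / (c * t).
have K0 : 0 <= K.
  by rewrite /K divr_ge0 ?exprn_ge0 ?ler0n // mulr_ge0 // ltW.
have pt : forall i, cmod (czsub (cphase (czadd (x i) (y i))) (cphase (x i))) <=
    (if (rho a i < n)%N then 2 else 0) + t * cmod (y i) ^+ 2 + K * ((rho a i)%:R)^-1.
  move=> i.
  have g1 : 0 <= t * cmod (y i) ^+ 2 by rewrite mulr_ge0 ?sqr_ge0 // ltW.
  have g2 : 0 <= K * ((rho a i)%:R)^-1 by rewrite mulr_ge0 ?invr_ge0 ?ler0n.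
  case: ifP => hr.
    have := cdist_le2 (x i) (y i); lra.
  have hi : (n <= rho a i)%N by rewrite leqNgt hr.
  have lb := @rho_lower R m n a (fun j => c * j%:R / m%:R ^+ 2) H i hi.
  have rp : (0 : R) < (rho a i)%:R by rewrite ltr0n (leq_trans n0 hi).
  have lbp : 0 < c * (rho a i)%:R / m%:R ^+ 2.
    by rewrite divr_gt0 ?mulr_gt0 ?exprn_gt0.
  have ap : 0 < a i := lt_le_trans lbp lb.
  have s0 : 0 < cmod (x i).
    rewrite lt_def cmod_ge0 andbT; apply/eqP => e.
    by move: ap; rewrite /a e expr0n ltxx.
  have h1 := cdist_le (x i) (y i) s0.
  have h2 : cmod (czsub (cphase (czadd (x i) (y i))) (cphase (x i))) <=
            2 * cmod (y i) / cmod (x i).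
    by rewrite ler_pdivlMr // mulrC.
  have h3 := @amgm R t (cmod (y i)) (cmod (x i)) t0 s0.
  have h4 : (t * cmod (x i) ^+ 2)^-1 <= K * ((rho a i)%:R)^-1.
    have e : K * ((rho a i)%:R)^-1 = (t * (c * (rho a i)%:R / m%:R ^+ 2))^-1.
      by rewrite /K; field; rewrite !gt_eqF.
    have p1 : 0 < t * (c * (rho a i)%:R / m%:R ^+ 2) := mulr_gt0 t0 lbp.
    have p2 : 0 < t * cmod (x i) ^+ 2 := mulr_gt0 t0 ap.
    by rewrite e lef_pV2 ?posrE // ler_pM2l.
  lra.
rewrite /cnorm1 /=.
have S : \sum_(i < m) cmod (czsub (cphase (czadd (x i) (y i))) (cphase (x i))) <=
  \sum_(i < m) ((if (rho a i < n)%N then 2 else 0) + t * cmod (y i) ^+ 2 + K * ((rho a i)%:R)^-1).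
  by apply: ler_sum => i _; exact: pt.
apply: (le_trans (ler_wpM2l _ S)); first by rewrite invr_ge0 ler0n.
rewrite !big_split /= -!mulr_sumr.
set A := \sum_(i < m) (if _ then _ else _).
set Y := \sum_(i < m) cmod (y i) ^+ 2.
set Hs := \sum_(i < m) _^-1.
have B1 : A <= 2 * n%:R.
  rewrite /A -big_mkcond /= sumr_const -(mulr_natr (2 : R)) ler_pM2l // ler_nat.
  apply: (leq_trans _ (rho_count _ a n)).
  apply: subset_leq_card; apply/fintype.subsetP => i; rewrite !inE; exact: ltnW.
have B2 : Y <= mu ^+ 2.
  rewrite /Y -cnorm2_sq.
  have : 0 <= cnorm2 y by exact: sqrtr_ge0.
  nra.
have B3 : Hs <= 1 + ln m%:R.
  have := @harm_bound R m (rho a) (rho_count _ a) [set: 'I_m]%SET.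
  rewrite cardsT card_ord.
  have e : \sum_(i in [set: 'I_m]%SET) ((rho a i)%:R : R)^-1 = Hs.
    by apply: eq_bigl => i; rewrite inE.
  rewrite e => h; apply: (le_trans h).
  have := harm_ln (R := R) m.-1; rewrite prednK //.
have A0 : 0 <= A by apply: sumr_ge0 => i _; case: ifP.
have e1 : m%:R^-1 * t = mu^-1 by rewrite /t; field; rewrite !gt_eqF.
have e2 : m%:R^-1 * K = mu / c by rewrite /K /t; field; rewrite !gt_eqF.
rewrite !mulrDr (mulrA _ t) (mulrA _ K) e1 e2.
have f1 : m%:R^-1 * A <= 2 * mu.
  have h : m%:R^-1 * A <= m%:R^-1 * (2 * n%:R) by rewrite ler_pM2l ?invr_gt0.
  have eq2 : (m%:R : R)^-1 * (2 * n%:R) = 2 * (n%:R / m%:R).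
    by rewrite mulrCA (mulrC (m%:R)^-1).
  lra.
have f2 : mu^-1 * Y <= mu.
  apply: (le_trans (ler_wpM2l _ B2)); first by rewrite invr_ge0 ltW.
  by rewrite expr2 mulKf ?gt_eqF.
have f3 : mu / c * Hs <= mu / c * (1 + ln m%:R).
  by apply: ler_wpM2l B3; apply: ltW; rewrite divr_gt0.
have f4 : mu / c * (1 + ln m%:R) = (1 + ln m%:R) / c * mu.
  by rewrite mulrC mulrA mulrAC.
lra.
Qed.
Lemma bigU_meas {d : measure_display} {T : measurableType d} {I : Type}
  (s : seq I) (F : I -> set T) :
  (forall i, measurable (F i)) -> measurable (\big[setU/set0]_(i <- s) F i).
Proof.
move=> mF; elim: s => [|i s IH]; first by rewrite big_nil.
by rewrite big_cons; apply: measurableU.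
Qed.

Lemma bigU_le {d : measure_display} {T : measurableType d} {R : realType}
  (mu : measure T R) {I : Type} (s : seq I) (F : I -> set T) :
  (forall i, measurable (F i)) ->
  (mu (\big[setU/set0]_(i <- s) F i) <= \sum_(i <- s) mu (F i))%E.
Proof.
move=> mF; elim: s => [|i s IH]; first by rewrite !big_nil measure0.
rewrite !big_cons; apply: (le_trans (measureU2 _ _ _)) => //.
  exact: bigU_meas.
exact: leeD.
Qed.

Lemma bigU_mem {T : Type} {I : eqType} (s : seq I) (F : I -> set T) i w :
  i \in s -> F i w -> (\big[setU/set0]_(i <- s) F i) w.
Proof.
elim: s => [//|j s IH]; rewrite inE big_cons => /orP [/eqP <- Fw|js Fw].
  by left.
by right; apply: IH.
Qed.

Lemma prod_le {R : realType} {I : Type} (s : seq I) (a : I -> \bar R) (b : I -> R) :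
  (forall i, (0 <= a i)%E /\ (a i <= (b i)%:E)%E) ->
  (\prod_(i <- s) a i <= (\prod_(i <- s) b i)%:E)%E.
Proof.
move=> H; elim: s => [|i s IH]; first by rewrite !big_nil.
rewrite !big_cons EFinM; apply: lee_pmul; first by case: (H i).
- by apply: prode_ge0 => k _; case: (H k).
- by case: (H i).
- exact: IH.
Qed.

Lemma normal_itv_le {R : realType} (s r : R) : s != 0 -> 0 <= r ->
  (normal_prob 0 s `](- r)%R, r[ <= (2 * r * normal_peak s)%:E)%E.
Proof.
move=> s0 r0; rewrite /normal_prob.
apply: (le_trans (@ge0_le_integral _ _ _ lebesgue_measure _ (measurable_itv _)
   (fun x => (normal_pdf 0 s x)%:E) (fun x => (normal_peak s)%:E) _ _ _ _)).
- by move=> x _; rewrite lee_fin normal_pdf_ge0.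
- apply/measurable_realfun.measurable_EFinP; apply: measurable_funTS; exact: measurable_normal_pdf.
- exact: measurable_cst.
- by move=> x _; rewrite lee_fin normal_pdf_ub.
rewrite integral_cst /=; last exact: measurable_itv.
have -> := (@lebesgue_measure_itv R `](- r), r[); rewrite /=.
have [rp|r0'] := ltrP (- r) r.
  rewrite lte_fin rp -EFinD -EFinM lee_fin opprK.
  have := normal_peak_ge0 s; nra.
rewrite ifF; last by rewrite lte_fin ltNge r0'.
rewrite mule0 lee_fin.
by rewrite mulr_ge0 ?normal_peak_ge0 // mulr_ge0.
Qed.
Definition Bset {R : realType} {m : nat} (S : {set 'I_m}) (r : R)
  (k : bool * 'I_m) : set R := if k.2 \in S then [set` `](- r), r[] else [set: R].

Definition Box {d : measure_display} {T : measurableType d} {R : realType} {m : nat}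
  (X : bool * 'I_m -> T -> R) (S : {set 'I_m}) (r : R) : set T :=
  \bigcap_(k in [set: bool * 'I_m]) (X k @^-1` Bset S r k).

Lemma Bset_meas {R : realType} {m : nat} (S : {set 'I_m}) (r : R) k :
  measurable (Bset S r k).
Proof. by rewrite /Bset; case: ifP => _ //; exact: measurable_itv. Qed.

Lemma Box_meas {d : measure_display} {T : measurableType d} {R : realType} {m : nat}
  (X : bool * 'I_m -> T -> R) S r :
  (forall k, measurable_fun [set: T] (X k)) -> measurable (Box X S r).
Proof.
move=> mX; apply: fin_bigcap_measurable; first exact: finite_finset.
move=> k _; rewrite -[X in measurable X]setTI; apply: mX => //; exact: Bset_meas.
Qed.

Lemma prod_pair {R : realType} {m : nat} (S : {set 'I_m}) (q : R) :
  \prod_(k : bool * 'I_m) (if k.2 \in S then q else 1) = (q ^+ 2) ^+ #|S|.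
Proof.
rewrite -(pair_bigA _ (fun (b : bool) (i : 'I_m) => if i \in S then q else 1)) /=.
rewrite big_bool /= -big_mkcond /= prodr_const.
by rewrite -exprMn expr2.
Qed.

Lemma Box_prob {d : measure_display} {T : measurableType d} {R : realType}
  (P : probability T R) (m : nat) (X : bool * 'I_m -> T -> R) S (r : R) :
  is_CN_scaled P X -> (0 < m)%N -> 0 <= r ->
  (P (Box X S r) <= (((2 * r * normal_peak (Num.sqrt (1 / (2 * m%:R)))) ^+ 2) ^+ #|S|)%:E)%E.
Proof.
move=> [mX [ind law]] m0 r0.
have s0 : Num.sqrt (1 / (2 * m%:R)) != 0 :> R.
  by rewrite gt_eqF // sqrtr_gt0 divr_gt0 // mulr_gt0 // ltr0n.
rewrite /Box ind; last by move=> k; exact: Bset_meas.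
rewrite -prod_pair.
apply: prod_le => k; split; first exact: measure_ge0.
rewrite /Bset; case: ifP => _.
  rewrite law; last exact: measurable_itv.
  exact: normal_itv_le.
by rewrite preimage_setT probability_setT.
Qed.
Lemma ffact_le_exp (m j : nat) : (m ^_ j <= m ^ j)%N.
Proof.
elim: j m => [|j IH] m; first by rewrite ffactn0 expn0.
rewrite ffactnS expnS leq_mul2l; apply/orP; right.
apply: (leq_trans (IH _)); case: (j) => [|j0]; first by rewrite !expn0.
by rewrite leq_exp2r // leq_pred.
Qed.

Lemma binom_bound {R : realType} (m j : nat) : (0 < j)%N -> (j <= m)%N ->
  'C(m, j)%:R * (expR (-2) * j%:R / m%:R) ^+ j <= expR (- j%:R) :> R.
Proof.
move=> j0 jm.
have m0 : (0 < m)%N := leq_trans j0 jm.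
set C := ('C(m, j)%:R : R); set F := (j`!%:R : R); set M := (m%:R ^+ j : R).
set J := (j%:R ^+ j : R); set E := (expR (-2) ^+ j : R).
have F0 : 0 < F by rewrite ltr0n fact_gt0.
have M0 : 0 < M by rewrite exprn_gt0 // ltr0n.
have hC : C * F <= M by rewrite /C /F /M -natrM bin_ffact -natrX ler_nat ffact_le_exp.
have hJ : J / F <= expR j%:R.
  have := @expR_ge1Dxn R j%:R j.-1 (ler0n _ _); rewrite prednK //.
  rewrite /J /F; have : 0 <= j%:R ^+ j / j`!%:R :> R by rewrite divr_ge0 ?exprn_ge0 ?ler0n.
  lra.
have e1 : C * (expR (-2) * j%:R / m%:R) ^+ j = (C * F) * (J / F) * E / M.
  rewrite /J /E /M !exprMn exprVn; field.
  by rewrite !gt_eqF // ?ltr0n ?exprn_gt0 ?fact_gt0 // ltr0n.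
have E0 : 0 <= E by rewrite exprn_ge0 // expR_ge0.
have J0 : 0 <= J / F by rewrite divr_ge0 ?exprn_ge0 ?ler0n // ltW.
rewrite e1.
apply: (@le_trans _ _ (M * expR j%:R * E / M)).
  rewrite ler_pM2r ?invr_gt0 // ler_wpM2r //.
  apply: ler_pM => //; first by rewrite mulr_ge0 ?ler0n // ltW.
have -> : M * expR j%:R * E / M = expR j%:R * E by field; rewrite gt_eqF.
rewrite /E -expRM_natr -expRD.
by rewrite le_eqVlt; apply/orP; left; apply/eqP; congr expR; ring.
Qed.
Lemma q_bound {R : realType} (m j : nat) (c : R) : (0 < m)%N -> 0 <= c ->
  (2 * Num.sqrt (c * j%:R / m%:R ^+ 2) * normal_peak (Num.sqrt (1 / (2 * m%:R)))) ^+ 2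
  <= 2 * c * j%:R / m%:R.
Proof.
move=> m0 c0.
have mR : (0 : R) < m%:R by rewrite ltr0n.
have hp : normal_peak (Num.sqrt (1 / (2 * m%:R))) ^+ 2 = m%:R / pi :> R.
  rewrite /normal_peak exprVn sqr_sqrtr; last first.
    by rewrite mulrn_wge0 // mulr_ge0 ?pi_ge0 // sqr_ge0.
  rewrite sqr_sqrtr; last by rewrite divr_ge0 // mulr_ge0.
  have := @pi_gt0 R; move: (pi : R) => p p0.
  by field; rewrite !gt_eqF.
rewrite !exprMn hp sqr_sqrtr; last by rewrite divr_ge0 ?mulr_ge0 ?exprn_ge0 ?ler0n.
have p2 := @pi_ge2 R.
have := @pi_gt0 R; move: p2; move: (pi : R) => p p2 p0.
have e : 2 ^+ 2 * (c * j%:R / m%:R ^+ 2) * (m%:R / p) =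
         (2 * c * j%:R / m%:R) * (2 / p).
  by field; rewrite !gt_eqF.
rewrite e; apply: ler_piMr.
  by rewrite divr_ge0 ?mulr_ge0 ?ler0n.
by rewrite ler_pdivrMr // mul1r.
Qed.

Lemma measurable_inv {R : realType} : measurable_fun [set: R] (@GRing.inv R).
Proof.
have -> : [set: R] = ~` [set 0] `|` [set 0] by rewrite setvU.
have m0 : measurable [set (0 : R)] by exact: measurable_set1.
apply/(measurable_funU _ (measurableC m0) m0); split; last exact: measurable_fun_set1.
apply: measurable_realfun.open_continuous_measurable_fun.
  apply: closed_openC; apply: accessible_closed_set1; apply: hausdorff_accessible.
  exact: Rhausdorff.
by move=> x /set_mem /= x0; apply: inv_continuous; apply/eqP.
Qed.

Lemma measurable_sqrt {R : realType} : measurable_fun [set: R] (@Num.sqrt R).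
Proof. apply: measurable_realfun.continuous_measurable_fun. exact: sqrt_continuous. Qed.

Lemma measurable_cmod {d : measure_display} {T : measurableType d} {R : realType}
  (f g : T -> R) : measurable_fun [set: T] f -> measurable_fun [set: T] g ->
  measurable_fun [set: T] (fun w => cmod (f w, g w)).
Proof.
move=> mf mg; rewrite /cmod /=.
apply: (measurableT_comp measurable_sqrt).
by apply: measurable_funD; apply: measurable_funX.
Qed.

Lemma measurable_phase1 {d : measure_display} {T : measurableType d} {R : realType}
  (f g : T -> R) : measurable_fun [set: T] f -> measurable_fun [set: T] g ->
  measurable_fun [set: T] (fun w => f w / cmod (f w, g w)).
Proof.
move=> mf mg; apply: measurable_funM => //.
exact: (measurableT_comp measurable_inv (measurable_cmod _ _ mf mg)).
Qed.

Lemma measurable_phase2 {d : measure_display} {T : measurableType d} {R : realType}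
  (f g : T -> R) : measurable_fun [set: T] f -> measurable_fun [set: T] g ->
  measurable_fun [set: T] (fun w => g w / cmod (f w, g w)).
Proof.
move=> mf mg; apply: measurable_funM => //.
exact: (measurableT_comp measurable_inv (measurable_cmod _ _ mf mg)).
Qed.

Lemma target_meas {d : measure_display} {T : measurableType d} {R : realType}
  (m : nat) (X : bool * 'I_m -> T -> R) (y : 'I_m -> R * R) (K : R) :
  (forall k, measurable_fun [set: T] (X k)) ->
  measurable [set w | m%:R^-1 *
               cnorm1 (fun i => czsub (cphase (czadd (cvec X w i) (y i)))
                                     (cphase (cvec X w i))) <= K].
Proof.
move=> mX.
have mf : measurable_fun [set: T] (fun w => m%:R^-1 *
               cnorm1 (fun i => czsub (cphase (czadd (cvec X w i) (y i)))
                                     (cphase (cvec X w i)))).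
  apply: measurable_funM; first exact: measurable_cst.
  rewrite /cnorm1; apply: measurable_sum => i /=.
  have m1 : measurable_fun [set: T] (fun w => X (true, i) w + (y i).1).
    by apply: measurable_funD => //; exact: measurable_cst.
  have m2 : measurable_fun [set: T] (fun w => X (false, i) w + (y i).2).
    by apply: measurable_funD => //; exact: measurable_cst.
  apply: measurable_cmod; apply: measurable_funB.
  - exact: measurable_phase1 _ _ m1 m2.
  - exact: measurable_phase1 _ _ (mX _) (mX _).
  - exact: measurable_phase2 _ _ m1 m2.
  - exact: measurable_phase2 _ _ (mX _) (mX _).
have := mf measurableT _ (measurable_itv `]-oo, K]).
rewrite setTI; congr measurable; apply/seteqP; split => w /=; rewrite in_itv /=.
Qed.
Lemma bad_j {d : measure_display} {T : measurableType d} {R : realType}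
  (P : probability T R) (m : nat) (X : bool * 'I_m -> T -> R) (c : R) (j : nat) :
  is_CN_scaled P X -> 2 * c = expR (-2) -> 0 < c -> (0 < j)%N -> (j <= m)%N ->
  (P (\big[setU/set0]_(S <- enum [set S : {set 'I_m} | #|S| == j]%SET)
        Box X S (Num.sqrt (c * j%:R / m%:R ^+ 2))) <= (expR (- j%:R))%:E)%E.
Proof.
move=> HX e2c c0 j0 jm.
have m0 : (0 < m)%N := leq_trans j0 jm.
have [mX _] := HX.
set A := [set S : {set 'I_m} | #|S| == j]%SET.
set r := Num.sqrt _.
have h1 := bigU_le P (enum A) (fun S => Box X S r) (fun S => Box_meas X S r mX).
apply: (le_trans h1).
set q := (2 * r * normal_peak (Num.sqrt (1 / (2 * m%:R)))) ^+ 2.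
have r0 : 0 <= r by exact: sqrtr_ge0.
have h2 : (\sum_(S <- enum A) P (Box X S r) <= \sum_(S <- enum A) (q ^+ j)%:E)%E.
  rewrite big_seq [X in (_ <= X)%E]big_seq.
  apply: lee_sum => S; rewrite mem_enum inE => /eqP hS; rewrite -hS.
  exact: Box_prob.
apply: (le_trans h2).
rewrite big_enum /= sumEFin sumr_const card_draws card_ord lee_fin.
rewrite -[X in X <= _]mulr_natl.
apply: (le_trans _ (binom_bound (R := R) m j j0 jm)).
apply: ler_wpM2l; first exact: ler0n.
have hq : q <= expR (-2) * j%:R / m%:R.
  rewrite -e2c; exact: q_bound (ltW c0).
apply: lerXn2r => //; rewrite ?nnegrE ?sqr_ge0 //.
Qed.
Theorem lemma2 (R : realType) :
  exists C : R, 0 < C /\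
  exists N : nat, forall n m : nat, (N <= n)%N -> (n <= m)%N ->
  forall (d : measure_display) (T : measurableType d) (P : probability T R)
         (X : bool * 'I_m -> T -> R),
  is_CN_scaled P X ->
  forall y : 'I_m -> R * R,
  ((1 - m%:R * expR (- (n%:R / 6)))%:E <=
  P [set w | (m%:R^-1 *
               cnorm1 (fun i => czsub (cphase (czadd (cvec X w i) (y i)))
                                     (cphase (cvec X w i)))
             <= C * ln m%:R * Num.max (cnorm2 y) (n%:R / m%:R))%R])%E.
Proof.
pose c : R := expR (-2) / 2.
have c0 : 0 < c by rewrite divr_gt0 ?expR_gt0.
have e2c : 2 * c = expR (-2) by rewrite /c mulrC divfK // pnatr_eq0.
exists (3 + 2 / c); split; first by rewrite addr_gt0 // divr_gt0.
exists (Num.Def.archi_bound (expR (1 : R))).+1.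
move=> n m Nn nm d T P X HX y.
have n0 : (0 < n)%N := leq_trans (ltn0Sn _) Nn.
have m0 : (0 < m)%N := leq_trans n0 nm.
have mR : (0 : R) < m%:R by rewrite ltr0n.
have lnm : 1 <= ln (m%:R : R).
  have h1 : expR 1 < (m%:R : R).
    apply: (lt_le_trans (archi_boundP (expR_ge0 _))).
    rewrite ler_nat; apply: leq_trans nm; exact: ltnW.
  rewrite -[X in X <= _](expRK 1) ler_ln ?posrE ?expR_gt0 //; exact: ltW.
have [mX _] := HX.
pose r := fun j : nat => Num.sqrt (c * j%:R / m%:R ^+ 2).
pose Bad := \big[setU/set0]_(n <= j < m.+1)
   \big[setU/set0]_(S <- enum [set S : {set 'I_m} | #|S| == j]%SET) Box X S (r j).
have mBad : measurable Bad.
  apply: bigU_meas => j; apply: bigU_meas => S; exact: Box_meas.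
have PBad : (P Bad <= (m%:R * expR (- (n%:R / 6)))%:E)%E.
  apply: (le_trans (bigU_le P _ _ _)).
    move=> j; apply: bigU_meas => S; exact: Box_meas.
  apply: (@le_trans _ _ (\sum_(n <= j < m.+1) (expR (- n%:R))%:E)%E).
    rewrite big_seq [X in (_ <= X)%E]big_seq; apply: lee_sum => j.
    rewrite mem_index_iota => /andP [nj jm]; rewrite /r.
    apply: (le_trans (bad_j _ _ _ _ _ HX e2c c0 (leq_trans n0 nj) _)); first by rewrite -ltnS.
    by rewrite lee_fin ler_expR lerN2 ler_nat.
  rewrite sumEFin sumr_const_nat lee_fin -[X in X <= _]mulr_natl.
  apply: ler_pM.
  - exact: ler0n.
  - exact: expR_ge0.
  - by rewrite ler_nat leq_subLR addnC -[m.+1]addn1 leq_add2l.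
  - rewrite ler_expR lerN2 ler_pdivrMr // ler_peMr ?ler0n //.
    by rewrite (ler_nat R 1 6).
set tgt := [set w | _].
have mtgt : measurable tgt by exact: target_meas.
have sub : ~` Bad `<=` tgt.
  move=> w nB; rewrite /tgt /=.
  apply: (le_trans (det_bound _ _ (cvec X w) y _ c0 n0 nm _)).
    move=> j nj jm; rewrite ltnNge; apply/negP => /card_geqP [s [us ss sub]].
    apply: nB.
    apply: (bigU_mem _ _ j); first by rewrite mem_index_iota nj ltnS.
    have cS : #|[set i in s]%SET| = j by rewrite cardsE (card_uniqP us) ss.
    apply: (bigU_mem _ _ [set i in s]%SET); first by rewrite mem_enum inE cS.
    move=> k _; rewrite /Bset; case: ifP => // kS.
    have hk : k.2 \in s by move: kS; rewrite inE.
    have := sub _ hk; rewrite inE => hlt.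
    rewrite /= in_itv /= -ltr_norml /r -sqrtr_sqr.
    have u0 : 0 < c * j%:R / m%:R ^+ 2.
      by apply: le_lt_trans hlt; exact: sqr_ge0.
    rewrite ltr_sqrt //; apply: le_lt_trans hlt.
    rewrite cmod_sq; case: k {kS hk sub} => [[|] i] /=.
      by rewrite lerDl sqr_ge0.
    by rewrite lerDr sqr_ge0.
  set mu := Num.max _ _.
  have mu0 : 0 <= mu by rewrite le_max divr_ge0 ?ler0n ?orbT.
  apply: ler_wpM2r => //.
  have h1 : (1 + ln (m%:R : R)) / c <= 2 / c * ln (m%:R : R).
    rewrite mulrAC ler_pM2r ?invr_gt0 //; lra.
  rewrite mulrDl; lra.
apply: (@le_trans _ _ (P (~` Bad))).
  rewrite probability_setC // EFinB; apply: leeB => //.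
apply: le_measure => //; rewrite inE //; exact: measurableC.
Qed.
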